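(* Let $q\ge5$ and let $\mathcal O$ be any $G_q$-orbit of $E_{n\Gamma}$-lines. Then $\Pi_\Gamma=\Lambda_\Gamma=P_{\mathcal C}=L_{\mathcal C}=0$. Moreover $P_T=\Pi_{2_{\mathcal C}}$ if $q\not\equiv0\pmod3$, and $P_{TO}=\Pi_{2_{\mathcal C}}$ if $q\equiv0\pmod3$.
   Context: Let $\mathbb F_q$ be the field of order $q$ and $\mathrm{PG}(3,q)$ the projective space with points $\mathbf P(x_0,x_1,x_2,x_3)$. For $t\in\mathbb F_q$ put $P(t)=\mathbf P(t^3,t^2,t,1)$, and $P(\infty)=\mathbf P(1,0,0,0)$; the twisted cubic is $\mathcal C=\{P(t):t\in\mathbb F_q\cup\{\infty\}\}$ and $G_q$ is the group of projectivities fixing $\mathcal C$. The osculating plane at $P(t)$ is $x_0-3tx_1+3t^2x_2-t^3x_3=0$ ($t\in\mathbb F_q$) and $x_3=0$ at $P(\infty)$; these are the $\Gamma$-planes. The tangent at $P(t)$, $t\in\mathbb F_q$, is the line through $P(t)$ and $\mathbf P(3t^2,2t,1,0)$; at $P(\infty)$ it is the line through $\mathbf P(1,0,0,0),\mathbf P(0,1,0,0)$. A real chord joins two distinct points of $\mathcal C$; an imaginary chord joins $P(\tau),P(\tau^q)$, $\tau\in\mathbb F_{q^2}\setminus\mathbb F_q$; chords are real chords, tangents and imaginary chords. An axis is the intersection of two distinct osculating planes at points of $\mathcal C$, or of the osculating planes at conjugate points $P(\tau),P(\tau^q)$, $\tau\in\mathbb F_{q^2}\setminus\mathbb F_q$.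 An $E_{n\Gamma}$-line is a line with no point of $\mathcal C$, not contained in a $\Gamma$-plane, which is neither a chord nor an axis. A $2_{\mathcal C}$-plane is a plane containing exactly two points of $\mathcal C$. $\mathcal C$-points are points of $\mathcal C$; for $q\not\equiv0\pmod3$, $T$-points are points off $\mathcal C$ on a tangent; for $q\equiv0\pmod3$, $TO$-points are points off $\mathcal C$ on a tangent and in exactly one $\Gamma$-plane. For a $G_q$-orbit $\mathcal O$ of lines and a plane type $\pi$ / point type $\mathfrak p$: $\Pi_\pi$ = number of $\pi$-planes through a line of $\mathcal O$, $\Lambda_\pi$ = number of lines of $\mathcal O$ in a $\pi$-plane, $P_{\mathfrak p}$ = number of $\mathfrak p$-points on a line of $\mathcal O$, $L_{\mathfrak p}$ = number of lines of $\mathcal O$ through a $\mathfrak p$-point (independent of the choices). *)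

(* Defs.v *)
(* PG(3,q) over a finite field F (q = #|F|); subspaces of F^4
   are represented canonically by square matrices A with <<A>>%MS = A. *)
From HB Require Import structures.
From mathcomp Require Import all_boot all_order all_algebra.
Set Implicit Arguments. Unset Strict Implicit. Unset Printing Implicit Defensive.
Import GRing.Theory.
Local Open Scope ring_scope.

Definition mkv (R : nzRingType) (a b c d : R) : 'rV[R]_4 :=
  \row_(i < 4) nth 0 [:: a; b; c; d] i.

Section PG3.
Variable F : finFieldType.

Definition subsp (k : nat) : {set 'M[F]_4} :=
  [set A : 'M[F]_4 | (\rank A == k) && (<<A>>%MS == A)].
Definition pts := subsp 1.
Definition lines := subsp 2.
Definition planes := subsp 3.

(* parameters in F ∪ {∞}; None = ∞ *)
Definition Pt (u : option F) : 'rV[F]_4 :=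
  if u is Some t then mkv (t ^+ 3) (t ^+ 2) t 1 else mkv 1 0 0 0.

Definition Cpts : {set 'M[F]_4} := [set <<Pt u>>%MS | u : option F].

Definition oscv (u : option F) : 'rV[F]_4 :=
  if u is Some t then mkv 1 (- (3%:R * t)) (3%:R * t ^+ 2) (- t ^+ 3)
  else mkv 0 0 0 1.
Definition osc (u : option F) : 'M[F]_4 := kermx (oscv u)^T.

Definition Gplane (pi : 'M[F]_4) : bool := [exists u, (pi == osc u)%MS].

Definition tanv (u : option F) : 'rV[F]_4 :=
  if u is Some t then mkv (3%:R * t ^+ 2) (2%:R * t) 1 0 else mkv 0 1 0 0.

Definition real_chord (l : 'M[F]_4) : bool :=
  [exists u, exists v, (u != v) && (l == Pt u + Pt v)%MS].
Definition tangent_line (l : 'M[F]_4) : bool :=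
  [exists u, (l == Pt u + tanv u)%MS].
Definition real_axis (l : 'M[F]_4) : bool :=
  [exists u, exists v, ~~ (osc u == osc v)%MS && (l == osc u :&: osc v)%MS].

(* Objects over F_{q^2}: L is a field of order q^2 with an embedding iota *)
Section Ext.
Variables (L : finFieldType) (iota : {rmorphism F -> L}).

Definition PtL (tau : L) : 'rV[L]_4 := mkv (tau ^+ 3) (tau ^+ 2) tau 1.
Definition oscvL (tau : L) : 'rV[L]_4 :=
  mkv 1 (- (3%:R * tau)) (3%:R * tau ^+ 2) (- tau ^+ 3).
Definition notinFq (tau : L) : bool := ~~ [exists a : F, iota a == tau].
Definition frobq (tau : L) : L := tau ^+ #|F|.

Definition imag_chord (l : 'M[F]_4) : bool :=
  [exists tau : L, notinFq tau &&
     (map_mx iota l == PtL tau + PtL (frobq tau))%MS].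
Definition imag_axis (l : 'M[F]_4) : bool :=
  [exists tau : L, notinFq tau &&
     (map_mx iota l == kermx (oscvL tau)^T :&: kermx (oscvL (frobq tau))^T)%MS].
End Ext.

Variables (L : finFieldType) (iota : {rmorphism F -> L}).

Definition chord (l : 'M[F]_4) : bool :=
  [|| real_chord l, tangent_line l | imag_chord iota l].
Definition axis (l : 'M[F]_4) : bool := real_axis l || imag_axis iota l.

Definition EnG_line (l : 'M[F]_4) : bool :=
  [&& l \in lines,
      [forall P in Cpts, ~~ (P <= l)%MS],
      [forall pi in planes, Gplane pi ==> ~~ (l <= pi)%MS],
      ~~ chord l & ~~ axis l].

Definition two_C_plane (pi : 'M[F]_4) : bool :=
  (pi \in planes) && (#|[set P in Cpts | (P <= pi)%MS]| == 2).

Definition on_tangent (P : 'M[F]_4) : bool := [exists u, (P <= Pt u + tanv u)%MS].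
Definition T_point (P : 'M[F]_4) : bool :=
  [&& P \in pts, P \notin Cpts & on_tangent P].
Definition TO_point (P : 'M[F]_4) : bool :=
  [&& P \in pts, P \notin Cpts, on_tangent P &
      #|[set pi in planes | Gplane pi && (P <= pi)%MS]| == 1].

Definition Gq : {set 'M[F]_4} :=
  [set M : 'M[F]_4 | (M \in unitmx) && ([set <<P *m M>>%MS | P in Cpts] == Cpts)].

Definition orbit_line (l : 'M[F]_4) : {set 'M[F]_4} :=
  [set <<l *m M>>%MS | M in Gq].

Definition Pi_Gamma (m : 'M[F]_4) : nat :=
  #|[set pi in planes | Gplane pi && (m <= pi)%MS]|.
Definition Lambda_Gamma (O : {set 'M[F]_4}) (pi : 'M[F]_4) : nat :=
  #|[set m in O | (m <= pi)%MS]|.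
Definition P_C (m : 'M[F]_4) : nat := #|[set P in Cpts | (P <= m)%MS]|.
Definition L_C (O : {set 'M[F]_4}) (P : 'M[F]_4) : nat := #|[set m in O | (P <= m)%MS]|.
Definition Pi_2C (m : 'M[F]_4) : nat := #|[set pi | two_C_plane pi && (m <= pi)%MS]|.
Definition P_T (m : 'M[F]_4) : nat := #|[set P | T_point P && (P <= m)%MS]|.
Definition P_TO (m : 'M[F]_4) : nat := #|[set P | TO_point P && (P <= m)%MS]|.

End PG3.

(* Main.v *)
Require Import Defs.
From HB Require Import structures.
From mathcomp Require Import all_boot all_order all_algebra all_field.
From mathcomp Require Import ring zify.
Set Implicit Arguments. Unset Strict Implicit. Unset Printing Implicit Defensive.
Import GRing.Theory.
Local Open Scope ring_scope.

Section Basics.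
Variable F : finFieldType.
Local Notation i0 := (@Ordinal 4 0 isT).
Local Notation i1 := (@Ordinal 4 1 isT).
Local Notation i2 := (@Ordinal 4 2 isT).
Local Notation i3 := (@Ordinal 4 3 isT).
Implicit Types a b c d k : F.

Definition mkc (a b c d : F) : 'cV[F]_4 := (mkv a b c d)^T.

Lemma ord4P (P : 'I_4 -> Prop) : P i0 -> P i1 -> P i2 -> P i3 -> forall i, P i.
Proof.
move=> H0 H1 H2 H3 [[|[|[|[|i]]]] Hi] //.
- by rewrite (bool_irrelevance Hi isT).
- by rewrite (bool_irrelevance Hi isT).
- by rewrite (bool_irrelevance Hi isT).
- by rewrite (bool_irrelevance Hi isT).
Qed.

Lemma mkvE0 a b c d : mkv a b c d 0 i0 = a. Proof. by rewrite mxE. Qed.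
Lemma mkvE1 a b c d : mkv a b c d 0 i1 = b. Proof. by rewrite mxE. Qed.
Lemma mkvE2 a b c d : mkv a b c d 0 i2 = c. Proof. by rewrite mxE. Qed.
Lemma mkvE3 a b c d : mkv a b c d 0 i3 = d. Proof. by rewrite mxE. Qed.

Lemma rV4E (x : 'rV[F]_4) : x = mkv (x 0 i0) (x 0 i1) (x 0 i2) (x 0 i3).
Proof.
apply/rowP; apply: ord4P; by rewrite !mxE.
Qed.

Lemma cV4E (x : 'cV[F]_4) : x = mkc (x i0 0) (x i1 0) (x i2 0) (x i3 0).
Proof.
apply/colP; apply: ord4P; by rewrite !mxE.
Qed.

Lemma mkv_inj a b c d (a' b' c' d' : F) :
  mkv a b c d = mkv a' b' c' d' -> [/\ a = a', b = b', c = c' & d = d'].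
Proof.
move=> E; split.
- by rewrite -(mkvE0 a b c d) E mkvE0.
- by rewrite -(mkvE1 a b c d) E mkvE1.
- by rewrite -(mkvE2 a b c d) E mkvE2.
- by rewrite -(mkvE3 a b c d) E mkvE3.
Qed.

Lemma mkc_inj a b c d (a' b' c' d' : F) :
  mkc a b c d = mkc a' b' c' d' -> [/\ a = a', b = b', c = c' & d = d'].
Proof. by move/(congr1 trmx); rewrite /mkc !trmxK; apply: mkv_inj. Qed.

Lemma scale_mkv k a b c d : k *: mkv a b c d = mkv (k * a) (k * b) (k * c) (k * d).
Proof. apply/rowP; apply: ord4P; by rewrite !mxE. Qed.

Lemma add_mkv a b c d (a' b' c' d' : F) :
  mkv a b c d + mkv a' b' c' d' = mkv (a + a') (b + b') (c + c') (d + d').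
Proof. apply/rowP; apply: ord4P; by rewrite !mxE. Qed.

Lemma scale_mkc k a b c d : k *: mkc a b c d = mkc (k * a) (k * b) (k * c) (k * d).
Proof. by rewrite /mkc -linearZ /= scale_mkv. Qed.

Lemma mkv0 : mkv 0 0 0 0 = 0 :> 'rV[F]_4.
Proof. apply/rowP; apply: ord4P; by rewrite !mxE. Qed.
Lemma mkc0 : mkc 0 0 0 0 = 0.
Proof. by rewrite /mkc mkv0 trmx0. Qed.

Lemma mkv_eq0 a b c d : (mkv a b c d == 0) = [&& a == 0, b == 0, c == 0 & d == 0].
Proof.
apply/eqP/idP.
- by rewrite -mkv0 => /mkv_inj [-> -> -> ->]; rewrite !eqxx.
- by case/and4P => /eqP-> /eqP-> /eqP-> /eqP->; rewrite mkv0.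
Qed.

Lemma mkc_eq0 a b c d : (mkc a b c d == 0) = [&& a == 0, b == 0, c == 0 & d == 0].
Proof. by rewrite /mkc -mkv_eq0 -(inj_eq (@trmx_inj _ _ _)) trmx0 trmxK. Qed.

Lemma mul_mkv_mkc a b c d (a' b' c' d' : F) :
  mkv a b c d *m mkc a' b' c' d' = (a * a' + b * b' + c * c' + d * d')%:M.
Proof.
apply/matrixP => i j; rewrite !ord1 !mxE /= !big_ord_recl big_ord0 !mxE /=.
by rewrite mulr1n addr0 !addrA.
Qed.

Definition dotc (x : 'rV[F]_4) (w : 'cV[F]_4) := (x *m w) 0 0.

Lemma dotE a b c d (a' b' c' d' : F) :
  dotc (mkv a b c d) (mkc a' b' c' d') = a * a' + b * b' + c * c' + d * d'.
Proof. by rewrite /dotc mul_mkv_mkc mxE mulr1n. Qed.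

Lemma mul_rc_eq0 (x : 'rV[F]_4) (w : 'cV[F]_4) : (x *m w == 0) = (dotc x w == 0).
Proof.
rewrite /dotc; apply/eqP/eqP => [->|E]; first by rewrite mxE.
by apply/matrixP => i j; rewrite !ord1 E mxE.
Qed.

End Basics.


Section Alg.
Variable F : finFieldType.
Implicit Types s t x y z : F.

Lemma lc1 (P Q a : F) : P = a * Q -> Q = 0 -> P = 0.
Proof. by move=> -> ->; rewrite mulr0. Qed.
Lemma lc2 (P Q1 Q2 a1 a2 : F) : P = a1 * Q1 + a2 * Q2 -> Q1 = 0 -> Q2 = 0 -> P = 0.
Proof. by move=> -> -> ->; rewrite !mulr0 addr0. Qed.
Lemma lc3 (P Q1 Q2 Q3 a1 a2 a3 : F) : P = a1 * Q1 + a2 * Q2 + a3 * Q3 ->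
  Q1 = 0 -> Q2 = 0 -> Q3 = 0 -> P = 0.
Proof. by move=> -> -> -> ->; rewrite !mulr0 !addr0. Qed.
Lemma mul0f x y : x * y = 0 -> x != 0 -> y = 0.
Proof. by move/eqP; rewrite mulf_eq0 => /orP[/eqP->|/eqP->]; rewrite ?eqxx. Qed.
Lemma subr0f x y : x - y != 0 <-> x != y.
Proof. by rewrite subr_eq0. Qed.

Lemma dPtS t (w0 w1 w2 w3 : F) :
  dotc (Pt (Some t)) (mkc w0 w1 w2 w3) = t^+3 * w0 + t^+2 * w1 + t * w2 + w3.
Proof. by rewrite /Pt dotE mul1r. Qed.
Lemma dPtN (w0 w1 w2 w3 : F) : dotc (Pt (@None F)) (mkc w0 w1 w2 w3) = w0.
Proof. by rewrite /Pt dotE; ring. Qed.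
Lemma dTS t (w0 w1 w2 w3 : F) :
  dotc (tanv (Some t)) (mkc w0 w1 w2 w3) = 3%:R * t^+2 * w0 + 2%:R * t * w1 + w2.
Proof. by rewrite /tanv dotE; ring. Qed.
Lemma dTN (w0 w1 w2 w3 : F) : dotc (tanv (@None F)) (mkc w0 w1 w2 w3) = w1.
Proof. by rewrite /tanv dotE; ring. Qed.

Definition dE := (dPtS, dPtN, dTS, dTN).

Lemma dd_SS s t (w0 w1 w2 w3 : F) : s != t ->
  s^+3 * w0 + s^+2 * w1 + s * w2 + w3 = 0 ->
  3%:R * s^+2 * w0 + 2%:R * s * w1 + w2 = 0 ->
  t^+3 * w0 + t^+2 * w1 + t * w2 + w3 = 0 ->
  3%:R * t^+2 * w0 + 2%:R * t * w1 + w2 = 0 ->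
  [/\ w0 = 0, w1 = 0, w2 = 0 & w3 = 0].
Proof.
move=> st H1 H2 H3 H4; have ts : t - s != 0 by rewrite subr_eq0 eq_sym.
have K1 : w0 * (t + 2%:R * s) + w1 = 0.
  apply: (mul0f _ (expf_neq0 2 ts)).
  by apply: (lc3 (a1 := 1) (a2 := -1) (a3 := -(t - s))) H3 H1 H2; ring.
have K2 : 3%:R * w0 * (t + s) + 2%:R * w1 = 0.
  apply: (mul0f _ ts).
  by apply: (lc2 (a1 := 1) (a2 := -1)) H4 H2; ring.
have e0 : w0 = 0.
  apply: (mul0f _ ts).
  by apply: (lc2 (a1 := 1) (a2 := -2%:R)) K2 K1; ring.
have e1 : w1 = 0 by rewrite -K1 e0; ring.
have e2 : w2 = 0 by rewrite -H2 e0 e1; ring.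
have e3 : w3 = 0 by rewrite -H1 e0 e1 e2; ring.
by [].
Qed.

Lemma dd_NS t (w0 w1 w2 w3 : F) : w0 = 0 -> w1 = 0 ->
  t^+3 * w0 + t^+2 * w1 + t * w2 + w3 = 0 ->
  3%:R * t^+2 * w0 + 2%:R * t * w1 + w2 = 0 ->
  [/\ w0 = 0, w1 = 0, w2 = 0 & w3 = 0].
Proof.
move=> e0 e1 H3 H4.
have e2 : w2 = 0 by rewrite -H4 e0 e1; ring.
have e3 : w3 = 0 by rewrite -H3 e0 e1 e2; ring.
by [].
Qed.

Lemma two_double (a b : option F) (w0 w1 w2 w3 : F) : a != b ->
  dotc (Pt a) (mkc w0 w1 w2 w3) = 0 -> dotc (tanv a) (mkc w0 w1 w2 w3) = 0 ->
  dotc (Pt b) (mkc w0 w1 w2 w3) = 0 -> dotc (tanv b) (mkc w0 w1 w2 w3) = 0 ->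
  mkc w0 w1 w2 w3 = 0.
Proof.
move=> ab; case: a ab => [s|]; case: b => [t|] //= ab; rewrite !dE.
- move=> H1 H2 H3 H4.
  have st : s != t by apply: contra ab => /eqP->.
  by case: (dd_SS st H1 H2 H3 H4) => -> -> -> ->; rewrite mkc0.
- move=> H1 H2 H3 H4.
  by case: (dd_NS H3 H4 H1 H2) => -> -> -> ->; rewrite mkc0.
- move=> H1 H2 H3 H4.
  by case: (dd_NS H1 H2 H3 H4) => -> -> -> ->; rewrite mkc0.
Qed.


Lemma two_root_SS s t (w0 w1 w2 w3 : F) : s != t ->
  (forall u, dotc (Pt u) (mkc w0 w1 w2 w3) = 0 -> u = Some s \/ u = Some t) ->
  dotc (Pt (Some s)) (mkc w0 w1 w2 w3) = 0 -> dotc (Pt (Some t)) (mkc w0 w1 w2 w3) = 0 ->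
  dotc (tanv (Some s)) (mkc w0 w1 w2 w3) = 0 \/ dotc (tanv (Some t)) (mkc w0 w1 w2 w3) = 0.
Proof.
move=> st hr; rewrite !dE => H1 H3.
have w0n : w0 != 0.
  apply/eqP => e0; have := hr None; rewrite dE => /(_ e0); by case.
have [e hw1] : exists e, w1 = - w0 * (s + t + e).
  by exists (- (w1 / w0) - s - t); field.
have G1 : (w2 - w0 * (s * t + s * e + t * e)) * s + (w3 + w0 * s * t * e) = 0.
  by rewrite -H1 hw1; ring.
have G3 : (w2 - w0 * (s * t + s * e + t * e)) * t + (w3 + w0 * s * t * e) = 0.
  by rewrite -H3 hw1; ring.
have st' : s - t != 0 by rewrite subr_eq0.
have A0 : w2 - w0 * (s * t + s * e + t * e) = 0.
  apply: (mul0f _ st'); by apply: (lc2 (a1 := 1) (a2 := -1)) G1 G3; ring.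
have Ce : e^+3 * w0 + e^+2 * w1 + e * w2 + w3 = 0.
  by apply: (lc2 (a1 := 1) (a2 := e - s)) G1 A0; rewrite hw1; ring.
have := hr (Some e); rewrite dE => /(_ Ce) [[es]|[es]].
- by left; rewrite -A0 hw1 es; ring.
- by right; rewrite -A0 hw1 es; ring.
Qed.

Lemma two_root_NS t (w0 w1 w2 w3 : F) :
  (forall u, dotc (Pt u) (mkc w0 w1 w2 w3) = 0 -> u = None \/ u = Some t) ->
  dotc (Pt None) (mkc w0 w1 w2 w3) = 0 -> dotc (Pt (Some t)) (mkc w0 w1 w2 w3) = 0 ->
  dotc (tanv None) (mkc w0 w1 w2 w3) = 0 \/ dotc (tanv (Some t)) (mkc w0 w1 w2 w3) = 0.
Proof.
move=> hr; rewrite !dE => e0 H3.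
have [w1z|w1n] := eqVneq w1 0; first by left.
have [e hw2] : exists e, w2 = - w1 * (t + e).
  by exists (- (w2 / w1) - t); field.
have Ce : e^+3 * w0 + e^+2 * w1 + e * w2 + w3 = 0.
  by rewrite -H3 hw2 e0; ring.
have := hr (Some e); rewrite dE => /(_ Ce) [//|[es]].
by right; rewrite hw2 es e0; ring.
Qed.

Lemma two_root (a b : option F) (w0 w1 w2 w3 : F) : a != b ->
  (forall u, dotc (Pt u) (mkc w0 w1 w2 w3) = 0 -> u = a \/ u = b) ->
  dotc (Pt a) (mkc w0 w1 w2 w3) = 0 -> dotc (Pt b) (mkc w0 w1 w2 w3) = 0 ->
  dotc (tanv a) (mkc w0 w1 w2 w3) = 0 \/ dotc (tanv b) (mkc w0 w1 w2 w3) = 0.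
Proof.
case: a => [s|]; case: b => [t|] //= ab hr H1 H2.
- have st : s != t by apply: contra ab => /eqP->.
  exact: two_root_SS.
- have hr' : forall u, dotc (Pt u) (mkc w0 w1 w2 w3) = 0 -> u = None \/ u = Some s.
    by move=> u /hr [] ->; [right|left].
  by case: (two_root_NS hr' H2 H1); [right|left].
- exact: two_root_NS.
Qed.

Lemma double_struct (a : option F) (w0 w1 w2 w3 : F) : mkc w0 w1 w2 w3 != 0 ->
  dotc (Pt a) (mkc w0 w1 w2 w3) = 0 -> dotc (tanv a) (mkc w0 w1 w2 w3) = 0 ->
  (exists k, mkc w0 w1 w2 w3 = k *: (oscv a)^T) \/
  (exists e, [/\ e != a, dotc (Pt e) (mkc w0 w1 w2 w3) = 0 &
     forall u, dotc (Pt u) (mkc w0 w1 w2 w3) = 0 -> u = a \/ u = e]).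
Proof.
move=> nz; case: a => [s|]; rewrite !dE => H1 H2.
- have Ct : forall t, t^+3 * w0 + t^+2 * w1 + t * w2 + w3 =
                      (t - s)^+2 * (w0 * (t + 2%:R * s) + w1).
    move=> t; apply/eqP; rewrite -subr_eq0; apply/eqP.
    by apply: (lc2 (a1 := 1) (a2 := t - s)) H1 H2; ring.
  have [e0|w0n] := eqVneq w0 0.
  + have w1n : w1 != 0.
      apply: contra nz => /eqP e1; apply/eqP.
      have e2 : w2 = 0 by rewrite -H2 e0 e1; ring.
      have e3 : w3 = 0 by rewrite -H1 e0 e1 e2; ring.
      by rewrite e0 e1 e2 e3 mkc0.
    right; exists None; split => //; first by rewrite dE.
    case=> [t|]; rewrite dE; last by right.
    rewrite Ct e0 mul0r add0r => /eqP; rewrite mulf_eq0 (negPf w1n) orbF.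
    by rewrite expf_eq0 /= subr_eq0 => /eqP->; left.
  + have [e hw1] : exists e, w1 = - w0 * (e + 2%:R * s).
      by exists (- (w1 / w0) - 2%:R * s); field.
    have [es|esn] := eqVneq e s.
    * left; exists w0; rewrite /oscv /mkc -linearZ /= scale_mkv.
      have e2 : w2 = w0 * (3%:R * s^+2) by rewrite -[LHS]subr0 -H2 hw1 es; ring.
      have e3 : w3 = w0 * (- s^+3) by rewrite -[LHS]subr0 -H1 e2 hw1 es; ring.
      by rewrite e2 e3 hw1 es; congr (mkv _ _ _ _)^T; ring.
    * right; exists (Some e); split.
      - by apply: contra esn => /eqP [->].
      - by rewrite dE Ct hw1; ring.
      case=> [t|]; rewrite dE; last by move=> /eqP; rewrite (negPf w0n).
      rewrite Ct hw1 => /eqP.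
      have -> : w0 * (t + 2%:R * s) + - w0 * (e + 2%:R * s) = w0 * (t - e) by ring.
      rewrite !mulf_eq0 (negPf w0n) /= !subr_eq0.
      by rewrite orbb; case/orP => /eqP->; [left|right].
- have [e2|w2n] := eqVneq w2 0.
  + left; exists w3; rewrite /oscv /mkc -linearZ /= scale_mkv H1 H2 e2.
    by congr (mkv _ _ _ _)^T; ring.
  + have [e hw3] : exists e, w3 = - w2 * e by exists (- (w3 / w2)); field.
    right; exists (Some e); split => //; first by rewrite dE H1 H2 hw3; ring.
    case=> [t|]; rewrite dE; last by left.
    rewrite H1 H2 hw3 => /eqP.
    have -> : t ^+ 3 * 0 + t ^+ 2 * 0 + t * w2 + - w2 * e = w2 * (t - e) by ring.
    by rewrite mulf_eq0 (negPf w2n) /= subr_eq0 => /eqP->; right.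
Qed.

End Alg.


Section Geo.
Variable F : finFieldType.
Implicit Types s t : F.
Implicit Types u v a b : option F.

Lemma dotcD (x y : 'rV[F]_4) w : dotc (x + y) w = dotc x w + dotc y w.
Proof. by rewrite /dotc mulmxDl mxE. Qed.
Lemma dotcZ k (x : 'rV[F]_4) w : dotc (k *: x) w = k * dotc x w.
Proof. by rewrite /dotc -scalemxAl mxE. Qed.

Lemma rv_prop n (x y : 'rV[F]_n) : (x <= y)%MS -> exists k, x = k *: y.
Proof.
case/submxP => D ->; exists (D 0 0); by rewrite {1}[D]mx11_scalar mul_scalar_mx.
Qed.

Lemma sub_ker_row (x : 'rV[F]_4) w : (x <= kermx w)%MS = (dotc x w == 0).
Proof. by rewrite sub_kermx mul_rc_eq0. Qed.

Definition Tl u : 'M[F]_4 := (Pt u + tanv u)%MS.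

Lemma subT_ker u w : (Tl u <= kermx w)%MS = (dotc (Pt u) w == 0) && (dotc (tanv u) w == 0).
Proof. by rewrite /Tl addsmx_sub !sub_ker_row. Qed.

Lemma Pt_neq0 u : Pt u != 0.
Proof.
case: u => [t|]; rewrite /Pt mkv_eq0; apply/negP.
- by case/and4P=> _ _ _; rewrite oner_eq0.
- by case/and4P; rewrite oner_eq0.
Qed.

Lemma tanv_neq0 u : tanv u != 0.
Proof.
case: u => [t|]; rewrite /tanv mkv_eq0; apply/negP.
- by case/and4P=> _ _ /eqP/eqP; rewrite oner_eq0.
- by case/and4P=> _ /eqP/eqP; rewrite oner_eq0.
Qed.

Lemma Pt_sub u v : (Pt u <= Pt v)%MS -> u = v.
Proof.
case/rv_prop => k; case: u => [s|]; case: v => [t|];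
  rewrite /Pt scale_mkv => /mkv_inj [h0 h1 h2 h3].
- by move: h3 h2; rewrite mulr1 => <-; rewrite mul1r => ->.
- by move: h3; rewrite mulr0 => /eqP; rewrite oner_eq0.
- by move: h3; rewrite mulr1 => k0; move: h0; rewrite -k0 mul0r => /eqP; rewrite oner_eq0.
- by [].
Qed.

Lemma tanv_notin u : ~~ (tanv u <= Pt u)%MS.
Proof.
apply/negP; case/rv_prop => k; case: u => [s|];
  rewrite /Pt /tanv scale_mkv => /mkv_inj [h0 h1 h2 h3].
- by move: h3; rewrite mulr1 => k0; move: h2; rewrite -k0 mul0r => /eqP; rewrite oner_eq0.
- by move: h1; rewrite mulr0 => /eqP; rewrite oner_eq0.
Qed.

Lemma rank_nz n (x : 'rV[F]_n) : x != 0 -> \rank x = 1%N.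
Proof. by rewrite rank_rV => ->. Qed.

Lemma rank_le_sub m1 m2 n (A : 'M[F]_(m1, n)) (B : 'M[F]_(m2, n)) :
  (A <= B)%MS -> (\rank B <= \rank A)%N -> (B <= A)%MS.
Proof.
move=> sAB le; have := mxrank_leqif_sup sAB.
by move=> /leqifP; case: ifP => // _ lt; move: (leq_trans lt le); rewrite ltnn.
Qed.

Lemma rank2 (x y : 'rV[F]_4) : x != 0 -> y != 0 -> ~~ (y <= x)%MS -> \rank (x + y)%MS = 2%N.
Proof.
move=> xn yn nyx; have := mxrank_sum_cap x y; rewrite !rank_nz //.
have -> : \rank (x :&: y)%MS = 0%N.
  apply/eqP; apply: contraR nyx; rewrite -lt0n => h.
  apply: (submx_trans _ (capmxSl x y)); apply: rank_le_sub; first exact: capmxSr.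
  by rewrite rank_nz.
by rewrite addn0.
Qed.

Lemma rankT u : \rank (Tl u) = 2%N.
Proof. exact: rank2 (Pt_neq0 u) (tanv_neq0 u) (tanv_notin u). Qed.

Lemma rank_colv (w : 'cV[F]_4) : w != 0 -> \rank w = 1%N.
Proof.
by move=> wn; rewrite -mxrank_tr rank_nz // -(inj_eq (@trmx_inj _ _ _)) trmxK trmx0.
Qed.

Lemma rank_ker (w : 'cV[F]_4) : w != 0 -> \rank (kermx w) = 3%N.
Proof. by move=> wn; rewrite mxrank_ker rank_colv. Qed.

Lemma plane_ker (pi : 'M[F]_4) : pi \in planes F ->
  exists2 w : 'cV[F]_4, w != 0 & (pi == kermx w)%MS.
Proof.
rewrite inE => /andP[/eqP rk _].
set K := kermx pi^T.
have rK : \rank K = 1%N by rewrite mxrank_ker mxrank_tr rk.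
have Kn : K != 0 by rewrite -mxrank_eq0 rK.
set r := nz_row K.
have rn : r != 0 by rewrite nz_row_eq0.
have rK0 : r *m pi^T = 0 by apply/eqP; rewrite -sub_kermx nz_row_sub.
exists r^T; first by rewrite -(inj_eq (@trmx_inj _ _ _)) trmxK trmx0.
have sub : (pi <= kermx r^T)%MS.
  by rewrite sub_kermx -(inj_eq (@trmx_inj _ _ _)) trmx_mul trmxK rK0 trmx0.
rewrite -(mxrank_leqif_eq sub) rank_ker ?rk //.
by rewrite -(inj_eq (@trmx_inj _ _ _)) trmxK trmx0.
Qed.

Definition f1 b : 'cV[F]_4 :=
  if b is Some t then mkc 0 1 (- (2%:R * t)) (t ^+ 2) else mkc 0 0 1 0.
Definition f2 b : 'cV[F]_4 :=
  if b is Some t then mkc 1 (- (3%:R * t)) (3%:R * t ^+ 2) (- t ^+ 3) else mkc 0 0 0 1.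

Lemma T_f1 b : (Tl b <= kermx (f1 b))%MS.
Proof. by rewrite subT_ker; case: b => [t|] /=; rewrite !dE; apply/andP; split; apply/eqP; ring. Qed.
Lemma T_f2 b : (Tl b <= kermx (f2 b))%MS.
Proof. by rewrite subT_ker; case: b => [t|] /=; rewrite !dE; apply/andP; split; apply/eqP; ring. Qed.

Lemma subT_row u (x : 'rV[F]_4) : (x <= Tl u)%MS ->
  exists al be, x = al *: Pt u + be *: tanv u.
Proof.
case/sub_addsmxP => [[D1 D2]] /= ->; exists (D1 0 0), (D2 0 0).
by rewrite {1}[D1]mx11_scalar {1}[D2]mx11_scalar !mul_scalar_mx.
Qed.

Lemma skewT_row a b (x : 'rV[F]_4) : a != b ->
  (x <= Tl a)%MS -> (x <= Tl b)%MS -> x = 0.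
Proof.
move=> ab /subT_row [al [be ->]] xb.
have h1 : dotc (al *: Pt a + be *: tanv a) (f1 b) = 0.
  by apply/eqP; rewrite -sub_ker_row (submx_trans xb) ?T_f1.
have h2 : dotc (al *: Pt a + be *: tanv a) (f2 b) = 0.
  by apply/eqP; rewrite -sub_ker_row (submx_trans xb) ?T_f2.
move: h1 h2; rewrite !dotcD !dotcZ.
clear xb. case: a ab => [s|]; case: b => [t|] //= ab; rewrite !dE => h1 h2.
- have st : s - t != 0 by rewrite subr_eq0; apply: contra ab => /eqP->.
  have K1 : al * (s - t) + 2%:R * be = 0.
    by apply: (mul0f _ st); apply: (lc1 (a := 1)) h1; ring.
  have K2 : al * (s - t) + 3%:R * be = 0.
    apply: (mul0f _ (expf_neq0 2 st)); by apply: (lc1 (a := 1)) h2; ring.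
  have eb : be = 0 by apply: (lc2 (a1 := 1) (a2 := -1)) K2 K1; ring.
  have ea : al = 0 by apply: (mul0f _ st); rewrite -K1 eb; ring.
  by rewrite ea eb !scale0r addr0.
- have ea : al = 0 by rewrite -h2; ring.
  have eb : be = 0 by rewrite -h1 ea; ring.
  by rewrite ea eb !scale0r addr0.
- have eb : be = 0 by rewrite -h1; ring.
  have ea : al = 0 by rewrite -h2 eb; ring.
  by rewrite ea eb !scale0r addr0.
Qed.

Lemma skewT a b (X : 'M[F]_4) : a != b ->
  (X <= Tl a)%MS -> (X <= Tl b)%MS -> X = 0.
Proof.
move=> ab xa xb; apply/row_matrixP => i; rewrite row0.
by apply: (skewT_row ab); apply: submx_trans (row_sub i X) _.
Qed.

End Geo.


Section Count.
Variable F : finFieldType.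
Implicit Types u v a b : option F.

Lemma gen_eq_sub m1 m2 (A : 'M[F]_(m1,4)) (B : 'M[F]_(m2,4)) : <<A>>%MS = <<B>>%MS -> (A <= B)%MS.
Proof. by move=> E; rewrite -genmxE E genmxE. Qed.

Lemma plane_ker4 (pi : 'M[F]_4) : pi \in planes F ->
  exists w0 w1 w2 w3, mkc w0 w1 w2 w3 != 0 /\ (pi == kermx (mkc w0 w1 w2 w3))%MS.
Proof.
case/plane_ker => w wn E; rewrite [w]cV4E in wn E.
by do 4 eexists; split; [exact: wn | exact: E].
Qed.

Lemma pts_eq (X Z : 'M[F]_4) : X \in pts F -> (\rank Z <= 1)%N -> (X <= Z)%MS -> X = <<Z>>%MS.
Proof.
rewrite inE => /andP[/eqP rX /eqP gX] rZ sXZ.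
have sZX : (Z <= X)%MS by apply: rank_le_sub sXZ _; rewrite rX.
rewrite -gX; apply: eq_genmx; exact/eqmxP/andP.
Qed.

Lemma planes_eq (P S : 'M[F]_4) : P \in planes F -> (S <= P)%MS -> \rank S = 3%N -> P = <<S>>%MS.
Proof.
rewrite inE => /andP[/eqP rP /eqP gP] sSP rS.
have sPS : (P <= S)%MS by apply: rank_le_sub sSP _; rewrite rP rS.
rewrite -gP; apply: eq_genmx; exact/eqmxP/andP.
Qed.

Lemma gen_pts (Z : 'M[F]_4) : \rank Z = 1%N -> <<Z>>%MS \in pts F.
Proof. by move=> r; rewrite inE mxrank_gen r genmx_id !eqxx. Qed.
Lemma gen_planes (Z : 'M[F]_4) : \rank Z = 3%N -> <<Z>>%MS \in planes F.
Proof. by move=> r; rewrite inE mxrank_gen r genmx_id !eqxx. Qed.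

Lemma kermx_scale (X : 'M[F]_4) k (c : 'cV[F]_4) : k != 0 ->
  (X <= kermx (k *: c))%MS = (X <= kermx c)%MS.
Proof. by move=> kn; rewrite !sub_kermx -scalemxAr scaler_eq0 (negPf kn). Qed.

Variable m : 'M[F]_4.
Hypothesis hm : m \in lines F.
Hypothesis noC : forall u, ~~ (Pt u <= m)%MS.
Hypothesis noG : forall u, ~~ (m <= osc u)%MS.

Lemma rank_m : \rank m = 2%N.
Proof. by move: hm; rewrite inE => /andP[/eqP]. Qed.

Lemma cap_le1 a : (\rank (m :&: Tl a) <= 1)%N.
Proof.
rewrite leqNgt; apply/negP => h.
have : (Tl a <= m :&: Tl a)%MS by apply: rank_le_sub (capmxSr _ _) _; rewrite rankT.
move=> /(submx_trans) /(_ (capmxSl _ _)) /(submx_trans (addsmxSl (Pt a) (tanv a))).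
by rewrite (negPf (noC a)).
Qed.

Lemma cap_from_pt a (X : 'M[F]_4) : X \in pts F -> (X <= m)%MS -> (X <= Tl a)%MS ->
  \rank (m :&: Tl a) = 1%N.
Proof.
rewrite inE => /andP[/eqP rX _] Xm Xa; apply/eqP; rewrite eqn_leq cap_le1 /=.
have sX : (X <= m :&: Tl a)%MS by rewrite sub_capmx Xm.
by move: (mxrankS sX); rewrite rX.
Qed.

Lemma cap_from_plane a (P : 'M[F]_4) : P \in planes F -> (m <= P)%MS -> (Tl a <= P)%MS ->
  \rank (m :&: Tl a) = 1%N.
Proof.
rewrite inE => /andP[/eqP rP _] mP aP; apply/eqP; rewrite eqn_leq cap_le1 /=.
have := mxrank_sum_cap m (Tl a); rewrite rank_m rankT.
have sS : (m + Tl a <= P)%MS by rewrite addsmx_sub mP.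
move: (mxrankS sS); rewrite rP; lia.
Qed.

Lemma sum_rank a : \rank (m :&: Tl a) = 1%N -> \rank (m + Tl a) = 3%N.
Proof. by move=> r; have := mxrank_sum_cap m (Tl a); rewrite r rank_m rankT addn1 => -[]. Qed.

Lemma count_T : P_T m = Pi_2C m.
Proof.
rewrite /P_T /Pi_2C.
set A := [set pi | two_C_plane pi && _]; set B := [set P | T_point P && _].
pose fa (pi : 'M[F]_4) := [pick a | (Tl a <= pi)%MS].
pose g pi := if fa pi is Some a then <<m :&: Tl a>>%MS else 0.
have E1 : forall pi, pi \in A -> exists a, (Tl a <= pi)%MS.
  move=> pi; rewrite inE => /andP[/andP[piP c2] mpi].
  have [P1 [P2 [neq EP]]] := cards2P _ c2.
  have [w0 [w1 [w2 [w3 [wn /eqmxP Epi]]]]] := plane_ker4 piP.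
  have : P1 \in [set P in Cpts F | (P <= pi)%MS] by rewrite EP !inE eqxx.
  rewrite inE => /andP[/imsetP[a _ EP1] Pa].
  have : P2 \in [set P in Cpts F | (P <= pi)%MS] by rewrite EP !inE eqxx orbT.
  rewrite inE => /andP[/imsetP[b _ EP2] Pb].
  have ab : a != b by apply: contra neq => /eqP ab; rewrite EP1 EP2 ab.
  have ha : dotc (Pt a) (mkc w0 w1 w2 w3) = 0.
    by apply/eqP; rewrite -sub_ker_row -Epi -genmxE -EP1.
  have hb : dotc (Pt b) (mkc w0 w1 w2 w3) = 0.
    by apply/eqP; rewrite -sub_ker_row -Epi -genmxE -EP2.
  have hr : forall u, dotc (Pt u) (mkc w0 w1 w2 w3) = 0 -> u = a \/ u = b.
    move=> u hu.
    have : <<Pt u>>%MS \in [set P in Cpts F | (P <= pi)%MS].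
      rewrite inE; apply/andP; split; first exact: imset_f. by rewrite genmxE Epi sub_ker_row hu.
    rewrite EP !inE => /orP[/eqP E|/eqP E]; [left|right]; apply: Pt_sub; apply: gen_eq_sub;
      by rewrite E ?EP1 ?EP2.
  case: (two_root ab hr ha hb) => ht; [exists a | exists b];
    by rewrite Epi subT_ker ?ha ?hb ht eqxx.
have gP : forall pi, pi \in A -> exists a, (Tl a <= pi)%MS /\ g pi = <<m :&: Tl a>>%MS.
  move=> pi piA; have [a0 Ha0] := E1 pi piA; rewrite /g /fa.
  case: pickP => [a Ha|H]; first by exists a.
  by move: (H a0); rewrite Ha0.
have Aplane : forall pi, pi \in A -> (pi \in planes F) /\ (m <= pi)%MS.
  by move=> pi; rewrite inE => /andP[/andP[-> _] ->].
have gB : forall pi, pi \in A -> g pi \in B.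
  move=> pi piA; have [a [Ta ->]] := gP pi piA; have [piP mpi] := Aplane pi piA.
  have r1 := cap_from_plane piP mpi Ta.
  rewrite inE; apply/andP; split; last by rewrite genmxE capmxSl.
  apply/and3P; split; first exact: gen_pts.
  - apply/negP => /imsetP [u _ E].
    have : (Pt u <= m :&: Tl a)%MS by apply: gen_eq_sub; rewrite E.
    by move=> /submx_trans /(_ (capmxSl _ _)); rewrite (negPf (noC u)).
  - by apply/existsP; exists a; rewrite genmxE capmxSr.
have ginj : {in A &, injective g}.
  move=> pi pi' hA hA' E.
  have [a [Ta Ea]] := gP pi hA; have [b [Tb Eb]] := gP pi' hA'.
  have [piP mpi] := Aplane pi hA; have [piP' mpi'] := Aplane pi' hA'.
  have r1 := cap_from_plane piP mpi Ta.
  have [ab|nab] := eqVneq a b.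
  - move: Tb; rewrite -ab => Tb.
    have s1 : ((m + Tl a)%MS <= pi)%MS by rewrite addsmx_sub mpi.
    have s2 : ((m + Tl a)%MS <= pi')%MS by rewrite addsmx_sub mpi'.
    by rewrite (planes_eq piP s1 (sum_rank r1)) (planes_eq piP' s2 (sum_rank r1)).
  - have X0 : <<m :&: Tl a>>%MS = 0.
      apply: (skewT nab); first by rewrite genmxE capmxSr.
      by rewrite -Ea E Eb genmxE capmxSr.
    by move: r1; rewrite -mxrank_gen X0 mxrank0.
have img : g @: A = B.
  apply/eqP; rewrite eqEsubset; apply/andP; split; apply/subsetP.
    by move=> X /imsetP [pi piA ->]; exact: gB.
  move=> X; rewrite inE => /andP[/and3P[Xp XnC /existsP [a Xa]] Xm].
  have r1 := cap_from_pt Xp Xm Xa.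
  have r3 := sum_rank r1.
  set pi := <<(m + Tl a)%MS>>%MS.
  have piP : pi \in planes F by exact: (gen_planes r3).
  have mpi : (m <= pi)%MS by rewrite genmxE addsmxSl.
  have Tpi : (Tl a <= pi)%MS by rewrite genmxE addsmxSr.
  have [w0 [w1 [w2 [w3 [wn /eqmxP Epi]]]]] := plane_ker4 piP.
  move: (Tpi); rewrite Epi subT_ker => /andP[/eqP ha /eqP hta].
  have piA : pi \in A.
    rewrite inE mpi andbT /two_C_plane piP /=.
    case: (double_struct wn ha hta) => [[k Ek]|[e [ea he hr]]].
    - have kn : k != 0 by apply: contra wn => /eqP k0; rewrite Ek k0 scale0r.
      by move: mpi; rewrite Epi Ek kermx_scale // (negPf (noG a)).
    - have -> : [set P in Cpts F | (P <= pi)%MS] = [set <<Pt a>>%MS; <<Pt e>>%MS].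
        apply/setP => P; rewrite !inE; apply/andP/orP.
        + case=> /imsetP [u _ ->]; rewrite genmxE Epi sub_ker_row => /eqP /hr [] ->;
            [left|right]; by rewrite eqxx.
        + case=> /eqP ->; (split; first exact: imset_f).
          * by rewrite genmxE (submx_trans _ Tpi) // addsmxSl.
          * by rewrite genmxE Epi sub_ker_row he.
      rewrite cards2; case: (eqVneq <<Pt a>>%MS <<Pt e>>%MS) => [E|//].
      by move: ea; rewrite (Pt_sub (gen_eq_sub E)) eqxx.
  apply/imsetP; exists pi => //.
  have [b [Tb ->]] := gP pi piA.
  have [ab|nab] := eqVneq a b.
    by rewrite -ab; apply: pts_eq Xp (cap_le1 a) _; rewrite sub_capmx Xm.
  move: Tb; rewrite Epi subT_ker => /andP[/eqP hb /eqP htb].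
  by move: wn; rewrite (two_double nab ha hta hb htb) eqxx.
by rewrite -img card_in_imset.
Qed.

End Count.


Section Char3.
Variable F : finFieldType.
Implicit Types u v a b : option F.

Lemma char3 : (#|F| %% 3 == 0)%N -> (3%:R : F) = 0.
Proof.
move=> h; have [p pp pc] := finPcharP F.
have hc : #|F| = (p ^ logn p #|pPrimeCharType pc|)%N by exact: (card_pprimeChar pc).
have d3 : (3 %| p ^ logn p #|pPrimeCharType pc|)%N by rewrite -hc /dvdn.
rewrite Euclid_dvdX // in d3; case/andP: d3 => d3 _.
rewrite dvdn_prime2 // in d3; move/eqP: d3 => e3.
by rewrite e3; exact: pcharf0.
Qed.

Hypothesis h3 : (3%:R : F) = 0.

Lemma cube_inj : injective (fun x : F => x ^+ 3).
Proof.
move=> x y /= E; apply/eqP; rewrite -subr_eq0; apply/eqP.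
have : (x - y) ^+ 3 = 0.
  have -> : (x - y) ^+ 3 = x ^+ 3 - y ^+ 3 - 3%:R * (x * y * (x - y)) by ring.
  by rewrite E h3 mul0r subrr subr0.
by move/eqP; rewrite expf_eq0 /= => /eqP.
Qed.

Lemma cube_root (z : F) : exists s, s ^+ 3 = z.
Proof.
have [g gK Kg] := injF_bij cube_inj.
by exists (g z); rewrite Kg.
Qed.

Lemma oscvT u : (oscv u)^T =
  if u is Some t then mkc 1 (- (3%:R * t)) (3%:R * t ^+ 2) (- t ^+ 3) else mkc 0 0 0 1.
Proof. by case: u. Qed.

Lemma tanv_osc a u : dotc (tanv a) (oscv u)^T = 0.
Proof.
rewrite oscvT; case: a => [s|]; case: u => [t|]; rewrite !dE.
- have -> : 3%:R * s ^+ 2 * 1 + 2%:R * s * - (3%:R * t) + 3%:R * t ^+ 2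
     = 3%:R * (s - t) ^+ 2 by ring.
  by rewrite h3 mul0r.
- by ring.
- by rewrite h3; ring.
- by [].
Qed.

Lemma Pt_osc a u : dotc (Pt a) (oscv u)^T = 0 -> a = u.
Proof.
rewrite oscvT; case: a => [s|]; case: u => [t|]; rewrite !dE.
- have -> : s ^+ 3 * 1 + s ^+ 2 * - (3%:R * t) + s * (3%:R * t ^+ 2) + - t ^+ 3
     = (s - t) ^+ 3 by ring.
  by move/eqP; rewrite expf_eq0 /= subr_eq0 => /eqP ->.
- have -> : s ^+ 3 * 0 + s ^+ 2 * 0 + s * 0 + 1 = 1 :> F by ring.
  by move/eqP; rewrite oner_eq0.
- by move/eqP; rewrite oner_eq0.
- by [].
Qed.


Lemma oscvT_neq0 u : (oscv u)^T != 0 :> 'cV[F]_4.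
Proof.
rewrite oscvT; case: u => [t|]; rewrite mkc_eq0; apply/negP.
- by case/and4P; rewrite oner_eq0.
- by case/and4P => _ _ _; rewrite oner_eq0.
Qed.

Lemma Pt_osc_self a : dotc (Pt a) (oscv a)^T = 0.
Proof. rewrite oscvT; case: a => [s|]; rewrite !dE; ring. Qed.

Lemma T_osc a : (Tl a <= osc a)%MS.
Proof. by rewrite /osc subT_ker Pt_osc_self tanv_osc eqxx. Qed.

Variable m : 'M[F]_4.
Hypothesis hm : m \in lines F.
Hypothesis noG : forall u, ~~ (m <= osc u)%MS.

Lemma tan_line a : ~~ (tanv a <= m)%MS.
Proof.
apply/negP => ta.
have rm : \rank m = 2%N by move: hm; rewrite inE => /andP[/eqP].
have nsub : ~~ (m <= tanv a)%MS.
  apply/negP => /mxrankS; rewrite rm rank_nz ?tanv_neq0 //.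
have [i yi] := row_subPn nsub.
set y := row i m in yi.
have yn : y != 0 by apply: contra yi => /eqP->; rewrite sub0mx.
have r2 := rank2 (tanv_neq0 a) yn yi.
have s1 : (tanv a + y <= m)%MS by rewrite addsmx_sub ta row_sub.
have s2 : (m <= tanv a + y)%MS by apply: rank_le_sub s1 _; rewrite r2 rm.
have [u hu] : exists u, dotc y (oscv u)^T = 0.
  rewrite [y]rV4E; set y0 := y 0 _; set y1 := y 0 _; set y2 := y 0 _; set y3 := y 0 _.
  have [y3z|y3n] := eqVneq y3 0.
    by exists None; rewrite oscvT dotE y3z; ring.
  have [s hs] := cube_root (y0 / y3).
  exists (Some s); rewrite oscvT dotE.
  have -> : y0 * 1 + y1 * - (3%:R * s) + y2 * (3%:R * s ^+ 2) + y3 * - s ^+ 3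
     = y0 - s ^+ 3 * y3 + 3%:R * (s ^+ 2 * y2 - s * y1) by ring.
  by rewrite hs h3 mul0r addr0 divfK // subrr.
have : (tanv a + y <= osc u)%MS.
  by rewrite addsmx_sub /osc !sub_ker_row tanv_osc hu eqxx.
by move/(submx_trans s2); rewrite (negPf (noG u)).
Qed.

Lemma TO_eq_T : P_TO m = P_T m.
Proof.
rewrite /P_TO /P_T; congr #|pred_of_set _|; apply/setP => X; rewrite !inE /TO_point /T_point.
case Xp : (X \in pts F) => //=; case: (X \notin Cpts F) => //=.
case Xt : (on_tangent X) => //=; case Xm : (X <= m)%MS; rewrite ?andbF ?andbT //.
move: Xt => /existsP [a Xa].
move: (Xp); rewrite inE => /andP[/eqP rX /eqP gX].
set x := nz_row X.
have xn : x != 0 by rewrite nz_row_eq0 -mxrank_eq0 rX.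
have xX : (x <= X)%MS by exact: nz_row_sub.
have Xx : (X <= x)%MS by apply: rank_le_sub xX _; rewrite rX rank_nz.
have [al [be Ex]] := subT_row (submx_trans xX Xa).
have aln : al != 0.
  apply/negP => /eqP al0; move: Ex xn; rewrite al0 scale0r add0r => Ex xn.
  have ben : be != 0 by apply: contra xn => /eqP b0; rewrite Ex b0 scale0r.
  have : (tanv a <= m)%MS.
    apply: (submx_trans _ Xm); apply: (submx_trans _ xX).
    by rewrite Ex eqmx_scale.
  by rewrite (negPf (tan_line a)).
apply/cards1P; exists <<osc a>>%MS; apply/setP => P; rewrite !inE.
apply/idP/eqP.
- case/and3P => Pp /existsP [u /eqmxP EP] XP.
  have : (x <= osc u)%MS by rewrite -EP (submx_trans xX).
  rewrite /osc sub_ker_row Ex dotcD !dotcZ tanv_osc mulr0 addr0 mulf_eq0 (negPf aln) /=.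
  move=> /eqP /Pt_osc au; move: Pp => /andP[_ /eqP <-].
  by rewrite au; exact: eq_genmx EP.
- move=> ->; rewrite mxrank_gen rank_ker ?oscvT_neq0 // genmx_id !eqxx /=.
  apply/andP; split; first by rewrite /Gplane; apply/existsP; exists a; apply/eqmxP; exact: genmxE.
  by rewrite genmxE (submx_trans Xa) // T_osc.
Qed.

End Char3.


Section Grp.
Variable F : finFieldType.
Implicit Types u v a b : option F.
Local Notation i0 := (@Ordinal 4 0 isT).
Local Notation i1 := (@Ordinal 4 1 isT).
Local Notation i2 := (@Ordinal 4 2 isT).
Local Notation i3 := (@Ordinal 4 3 isT).

Lemma sum4 (f : 'I_4 -> F) : \sum_(j < 4) f j = f i0 + f i1 + f i2 + f i3.
Proof.
rewrite !big_ord_recl big_ord0 addr0 !addrA.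
by congr (_ + _ + _ + _); congr f; apply: val_inj.
Qed.

Lemma mulmx_mkv (a b c d : F) (A : 'M[F]_4) : mkv a b c d *m A =
  mkv (a * A i0 i0 + b * A i1 i0 + c * A i2 i0 + d * A i3 i0)
      (a * A i0 i1 + b * A i1 i1 + c * A i2 i1 + d * A i3 i1)
      (a * A i0 i2 + b * A i1 i2 + c * A i2 i2 + d * A i3 i2)
      (a * A i0 i3 + b * A i1 i3 + c * A i2 i3 + d * A i3 i3).
Proof.
apply/rowP; apply: ord4P; rewrite !mxE sum4 !mxE //.
Qed.

Lemma mulmx_mkc (a b c d : F) (A : 'M[F]_4) : A *m mkc a b c d =
  mkc (A i0 i0 * a + A i0 i1 * b + A i0 i2 * c + A i0 i3 * d)
      (A i1 i0 * a + A i1 i1 * b + A i1 i2 * c + A i1 i3 * d)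
      (A i2 i0 * a + A i2 i1 * b + A i2 i2 * c + A i2 i3 * d)
      (A i3 i0 * a + A i3 i1 * b + A i3 i2 * c + A i3 i3 * d).
Proof.
apply/colP; apply: ord4P; rewrite !mxE sum4 !mxE //.
Qed.


Definition hP (s r : F) : 'rV[F]_4 := mkv (s ^+ 3) (s ^+ 2 * r) (s * r ^+ 2) (r ^+ 3).
Definition hw (s r : F) : 'cV[F]_4 :=
  mkc (r ^+ 3) (- (3%:R * s * r ^+ 2)) (3%:R * s ^+ 2 * r) (- s ^+ 3).
Definition Phi (al be ga de : F) : 'M[F]_4 :=
  \matrix_(i < 4, j < 4) nth 0 (nth [::]
   [:: [:: al ^+ 3; al ^+ 2 * ga; al * ga ^+ 2; ga ^+ 3];
       [:: 3%:R * al ^+ 2 * be; al ^+ 2 * de + 2%:R * al * be * ga;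
           be * ga ^+ 2 + 2%:R * al * ga * de; 3%:R * ga ^+ 2 * de];
       [:: 3%:R * al * be ^+ 2; 2%:R * al * be * de + be ^+ 2 * ga;
           al * de ^+ 2 + 2%:R * be * ga * de; 3%:R * ga * de ^+ 2];
       [:: be ^+ 3; be ^+ 2 * de; be * de ^+ 2; de ^+ 3]] i) j.

Lemma hP_Phi al be ga de t z :
  hP t z *m Phi al be ga de = hP (al * t + be * z) (ga * t + de * z).
Proof. rewrite /hP mulmx_mkv !mxE /=; congr (mkv _ _ _ _); ring. Qed.

Lemma Phi_hw al be ga de s r :
  Phi al be ga de *m hw s r = hw (s * de - r * be) (r * al - s * ga).
Proof. rewrite /hw mulmx_mkc !mxE /=; congr (mkc _ _ _ _); ring. Qed.

Lemma Phi_inv al be ga de :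
  Phi de (- be) (- ga) al *m Phi al be ga de = ((al * de - be * ga) ^+ 3) *: 1%:M.
Proof.
apply/matrixP => i j; rewrite !mxE sum4 !mxE /=.
move: i j; apply: ord4P; apply: ord4P; rewrite /= ?mulr1n ?mulr0n; ring.
Qed.


Lemma poly3_zero (c0 c1 c2 c3 : F) : (5 <= #|F|)%N ->
  (forall t : F, t != 0 -> c3 * t ^+ 3 + c2 * t ^+ 2 + c1 * t + c0 = 0) ->
  [/\ c0 = 0, c1 = 0, c2 = 0 & c3 = 0].
Proof.
move=> hq ht.
pose p := Poly [:: c0; c1; c2; c3].
have p0 : p = 0.
  apply/eqP; apply/negPn/negP => pn.
  have := max_poly_roots pn (rs := enum (predC1 (0 : F))).
  rewrite enum_uniq -cardE cardC1.
  have -> : all (root p) (enum (predC1 (0 : F))).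
    apply/allP => x; rewrite mem_enum => xn; rewrite rootE horner_Poly /=; apply/eqP.
    rewrite -[RHS](ht x xn); ring.
  move=> /(_ isT isT) lt; have hs : (size p <= 4)%N := size_Poly [:: c0; c1; c2; c3].
  have h1 : (#|F|.-1 < 4)%N := leq_trans lt hs.
  by move: h1 hq; rewrite -subn1; lia.
have c i : [:: c0; c1; c2; c3]`_i = 0 by rewrite -coef_Poly -/p p0 coef0.
by split; [exact: (c 0%N) | exact: (c 1%N) | exact: (c 2%N) | exact: (c 3%N)].
Qed.

Definition hs u : F := if u is Some t then t else 1.
Definition hr u : F := if u is Some t then 1 else 0.

Lemma Pt_hP u : Pt u = hP (hs u) (hr u).
Proof. by case: u => [t|]; rewrite /Pt /hP /=; congr mkv; ring. Qed.

Lemma osc_hw u : (oscv u)^T = (if u is Some _ then 1 else -1) *: hw (hs u) (hr u).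
Proof. by case: u => [t|]; rewrite oscvT /hw scale_mkc /=; congr mkc; ring. Qed.

Lemma hw_osc s r : exists u (rho : F), hw s r = rho *: (oscv u)^T.
Proof.
have [r0|rn] := eqVneq r 0.
  by exists None, (- s ^+ 3); rewrite oscvT /hw scale_mkc r0; congr mkc; ring.
exists (Some (s / r)), (r ^+ 3); rewrite oscvT /hw scale_mkc; by congr mkc; field.
Qed.

Lemma hD a b : a != b -> hs a * hr b - hr a * hs b != 0.
Proof.
case: a => [s|]; case: b => [t|] //= ab.
- by rewrite mulr1 mul1r subr_eq0; apply: contra ab => /eqP->.
- by rewrite mulr0 mul1r sub0r oppr_eq0 oner_eq0.
- by rewrite !mulr1 mul0r subr0 oner_eq0.
Qed.


Lemma Gq_fwd (M : 'M[F]_4) : M \in Gq F ->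
  forall u, exists v (k : F), k != 0 /\ Pt u *m M = k *: Pt v.
Proof.
rewrite inE => /andP[Mu /eqP EC] u.
have : <<(<<Pt u>>%MS *m M)>>%MS \in Cpts F.
  by rewrite -EC; apply: imset_f; exact: imset_f.
case/imsetP => v _ /gen_eq_sub E.
have : (Pt u *m M <= Pt v)%MS.
  by apply: submx_trans E; apply: submxMr; rewrite genmxE.
case/rv_prop => k Ek; exists v, k; split => //.
apply: contra (Pt_neq0 u) => /eqP k0.
by rewrite -[Pt u](mulmxK Mu) Ek k0 scale0r mul0mx.
Qed.

Lemma Gq_bwd (M : 'M[F]_4) : M \in Gq F ->
  forall u, exists v, (Pt u <= Pt v *m M)%MS.
Proof.
rewrite inE => /andP[Mu /eqP EC] u.
have : <<Pt u>>%MS \in [set <<P *m M>>%MS | P in Cpts F] by rewrite EC; exact: imset_f.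
case/imsetP => P /imsetP [v _ ->] E; exists v.
have := gen_eq_sub E; move/submx_trans; apply.
by apply: submxMr; rewrite genmxE.
Qed.


Lemma Gq_osc (M : 'M[F]_4) : (5 <= #|F|)%N -> M \in Gq F ->
  forall v, exists u (k : F), k != 0 /\ M *m (oscv v)^T = k *: (oscv u)^T.
Proof.
move=> hq hM v; have fwd := Gq_fwd hM.
move: (hM); rewrite inE => /andP[Mu _].
have [a [ka [kan Ea]]] := fwd None.
have [b [kb [kbn Eb]]] := fwd (Some 0).
have ab : a != b.
  apply/eqP => eab; move: Ea; rewrite eab => Ea.
  have : (Pt None *m M <= Pt (Some 0) *m M)%MS.
    by rewrite Ea Eb scalemx_sub // eqmx_scale.
  by rewrite submxMfree ?row_free_unit // => /Pt_sub.
set a1 := hs a; set a2 := hr a; set b1 := hs b; set b2 := hr b.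
have Dn : a1 * b2 - a2 * b1 != 0 := hD ab.
set D := a1 * b2 - a2 * b1.
set N := Phi b2 (- b1) (- a2) a1.
set N' := Phi a1 b1 a2 b2.
have NN' : N *m N' = (D ^+ 3) *: 1%:M.
  by rewrite /N /N' Phi_inv /D; congr (_ ^+ 3 *: _); ring.
have Nu : N \in unitmx.
  have : N *m ((D ^+ 3)^-1 *: N') = 1%:M.
    by rewrite -scalemxAr NN' scalerA mulVf ?scale1r // expf_neq0.
  by case/mulmx1_unit.
set M' := M *m N.
have M'u : M' \in unitmx by rewrite unitmx_mul Mu Nu.
set al := ka * D ^+ 3; set de := kb * D ^+ 3.
have aln : al != 0 by rewrite mulf_neq0 // expf_neq0.
have den : de != 0 by rewrite mulf_neq0 // expf_neq0.
have r0 : Pt None *m M' = al *: mkv 1 0 0 0.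
  rewrite /M' mulmxA Ea -scalemxAl Pt_hP hP_Phi /hP !scale_mkv /al /D.
  congr mkv; rewrite /a1 /a2 /b1 /b2; ring.
have r3 : Pt (Some 0) *m M' = de *: mkv 0 0 0 1.
  rewrite /M' mulmxA Eb -scalemxAl Pt_hP hP_Phi /hP !scale_mkv /de /D /a1 /a2 /b1 /b2 /=.
  congr mkv; ring.
move: r0; rewrite /Pt mulmx_mkv scale_mkv => /mkv_inj [e00 e01 e02 e03].
move: r3; rewrite mulmx_mkv scale_mkv => /mkv_inj [e30 e31 e32 e33].
have E00 : M' i0 i0 = al by rewrite -[RHS]mulr1 -e00; ring.
have E01 : M' i0 i1 = 0 by rewrite -(mulr0 al) -e01; ring.
have E02 : M' i0 i2 = 0 by rewrite -(mulr0 al) -e02; ring.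
have E03 : M' i0 i3 = 0 by rewrite -(mulr0 al) -e03; ring.
have E30 : M' i3 i0 = 0 by rewrite -(mulr0 de) -e30; ring.
have E31 : M' i3 i1 = 0 by rewrite -(mulr0 de) -e31; ring.
have E32 : M' i3 i2 = 0 by rewrite -(mulr0 de) -e32; ring.
have E33 : M' i3 i3 = de by rewrite -[RHS]mulr1 -e33; ring.
clear e00 e01 e02 e03 e30 e31 e32 e33.
have Y : forall t, t != 0 ->
  [/\ (al * M' i1 i2) * t^+3 + (al * M' i2 i2 + M' i1 i0 * M' i1 i2 - M' i1 i1 ^+ 2) * t^+2
      + (M' i1 i0 * M' i2 i2 + M' i2 i0 * M' i1 i2 - 2%:R * M' i1 i1 * M' i2 i1) * t
      + (M' i2 i0 * M' i2 i2 - M' i2 i1 ^+ 2) = 0 &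
      (M' i1 i1 * M' i1 i3 - M' i1 i2 ^+ 2) * t^+3
      + (M' i1 i1 * M' i2 i3 + M' i2 i1 * M' i1 i3 - 2%:R * M' i1 i2 * M' i2 i2) * t^+2
      + (M' i1 i1 * de + M' i2 i1 * M' i2 i3 - M' i2 i2 ^+ 2) * t + M' i2 i1 * de = 0].
  move=> t tn; have [w [kt [_ Et]]] := fwd (Some t).
  have : Pt (Some t) *m M' = kt *: hP (b2 * hs w + - b1 * hr w) (- a2 * hs w + a1 * hr w).
    by rewrite /M' mulmxA Et -scalemxAl Pt_hP hP_Phi.
  rewrite /Pt mulmx_mkv /hP scale_mkv => /mkv_inj [].
  move: (b2 * hs w + - b1 * hr w) (- a2 * hs w + a1 * hr w) => S R y0 y1 y2 y3.
  split.
  - apply: (mul0f _ (expf_neq0 2 tn)).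
    rewrite -[RHS](_ : kt * S ^+ 3 * (kt * (S * R ^+ 2)) - (kt * (S ^+ 2 * R)) ^+ 2 = 0);
      last by ring.
    rewrite -y0 -y1 -y2 ?E00 ?E01 ?E02 ?E03 ?E30 ?E31 ?E32 ?E33; ring.
  - apply: (mul0f _ tn).
    rewrite -[RHS](_ : kt * (S ^+ 2 * R) * (kt * R ^+ 3) - (kt * (S * R ^+ 2)) ^+ 2 = 0);
      last by ring.
    rewrite -y1 -y2 -y3 ?E00 ?E01 ?E02 ?E03 ?E30 ?E31 ?E32 ?E33; ring.
have [d0 d1 d2 d3] := poly3_zero hq (fun t tn => (Y t tn).1).
have [c0 c1 c2 c3] := poly3_zero hq (fun t tn => (Y t tn).2).
clear Y.
have Q1 : M' i2 i1 = 0 by move/eqP: c0; rewrite mulf_eq0 (negPf den) orbF => /eqP.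
have P2 : M' i1 i2 = 0 by apply: (mul0f d3 aln).
have P1n : M' i1 i1 != 0.
  apply/eqP => P1.
  have : M' *m mkc 0 1 0 0 = 0.
    by rewrite mulmx_mkc E01 E31 P1 Q1 -mkc0; congr mkc; ring.
  move=> /(congr1 (mulmx (invmx M'))); rewrite mulKmx // mulmx0 => /eqP.
  by rewrite mkc_eq0 oner_eq0 andbF.
have P3 : M' i1 i3 = 0.
  by apply: (mul0f _ P1n); rewrite -[RHS]c3 P2; ring.
have Q3 : M' i2 i3 = 0.
  by apply: (mul0f _ P1n); rewrite -[RHS]c2 P2 Q1; ring.
have Q2 : M' i2 i2 = M' i1 i1 ^+ 2 / al.
  by apply/(canRL (mulfK aln)); rewrite mulrC -[LHS]subr0 -d2 P2; ring.
have Q2n : M' i2 i2 != 0 by rewrite Q2 mulf_neq0 ?invr_eq0 // expf_neq0.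
have P0 : M' i1 i0 = 0.
  by apply: (mul0f _ Q2n); rewrite mulrC -[RHS]d1 P2 Q1; ring.
have Q0 : M' i2 i0 = 0.
  by apply: (mul0f _ Q2n); rewrite mulrC -[RHS]d0 Q1; ring.
have DE : de = M' i2 i2 ^+ 2 / M' i1 i1.
  by apply/(canRL (mulfK P1n)); rewrite mulrC -[LHS]subr0 -c1 Q1; ring.
have M'hw : forall S R, M' *m hw S R = al *: hw (M' i1 i1 / al * S) R.
  move=> S R; rewrite /hw mulmx_mkc E00 E01 E02 E03 E30 E31 E32 E33 P0 P2 P3 Q0 Q1 Q3.
  rewrite scale_mkc DE Q2; congr mkc; field; rewrite ?aln ?P1n //.
have EM : M = (D ^+ 3)^-1 *: (M' *m N').
  by rewrite /M' -mulmxA NN' -scalemxAr mulmx1 scalerA mulVf ?scale1r // expf_neq0.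
have [K [S [R EMc]]] : exists K S R, M *m (oscv v)^T = K *: hw S R.
  rewrite osc_hw EM -scalemxAl -scalemxAr -mulmxA Phi_hw M'hw !scalerA.
  by do 3 eexists.
have [u [rho Eh]] := hw_osc S R.
exists u, (K * rho); rewrite EMc Eh scalerA; split => //.
apply: contra (oscvT_neq0 v) => /eqP K0.
have : M *m (oscv v)^T = 0 by rewrite EMc Eh scalerA K0 scale0r.
by move=> /(congr1 (mulmx (invmx M))); rewrite mulKmx // mulmx0 => ->.
Qed.

End Grp.


Section Final.
Variable F : finFieldType.
Implicit Types u v : option F.

Lemma orbit_props (l : 'M[F]_4) (hq : (5 <= #|F|)%N) :
  l \in lines F -> (forall u, ~~ (Pt u <= l)%MS) -> (forall u, ~~ (l <= osc u)%MS) ->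
  forall m, m \in orbit_line l ->
  [/\ m \in lines F, (forall u, ~~ (Pt u <= m)%MS) & (forall u, ~~ (m <= osc u)%MS)].
Proof.
move=> lL lC lG m /imsetP [M hM ->].
move: (hM); rewrite inE => /andP[Mu _].
have rf : row_free M by rewrite row_free_unit.
split.
- move: lL; rewrite !inE => /andP[rl _].
  by rewrite mxrank_gen mxrankMfree // rl genmx_id eqxx.
- move=> u; rewrite genmxE; apply/negP => hu.
  have [v hv] := Gq_bwd hM u.
  have r1 : \rank (Pt v *m M) = 1%N by rewrite mxrankMfree // rank_nz ?Pt_neq0.
  have : (Pt v *m M <= Pt u)%MS by apply: rank_le_sub hv _; rewrite r1 rank_nz ?Pt_neq0.
  move=> /submx_trans /(_ hu); rewrite submxMfree //.
  by rewrite (negPf (lC v)).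
- move=> u; rewrite genmxE; apply/negP.
  rewrite /osc sub_kermx -mulmxA.
  have [w [k [kn Ek]]] := Gq_osc hq hM u.
  rewrite Ek -scalemxAr scaler_eq0 (negPf kn) /= -sub_kermx.
  by rewrite (negPf (lG w)).
Qed.

End Final.

Unset Implicit Arguments. Set Strict Implicit.

Theorem proposition3p4 (F L : finFieldType) (iota : {rmorphism F -> L})
  (hL : #|L| = (#|F| ^ 2)%N) (hq : (5 <= #|F|)%N)
  (l : 'M[F]_4) (hl : EnG_line iota l) :
  let O := orbit_line l in
  [/\ (forall m, m \in O -> Pi_Gamma m = 0%N),
      (forall pi, pi \in planes F -> Gplane pi -> Lambda_Gamma O pi = 0%N),
      ((forall m, m \in O -> P_C m = 0%N) /\
       (forall P, P \in Cpts F -> L_C O P = 0%N)),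
      ((#|F| %% 3 != 0)%N -> forall m, m \in O -> P_T m = Pi_2C m)
    & ((#|F| %% 3 == 0)%N -> forall m, m \in O -> P_TO m = Pi_2C m)].
Proof.
move=> O.
case/and5P: hl => lL /forallP lC0 /forallP lG0 _ _.
have lC : forall u, ~~ (Pt u <= l)%MS.
  move=> u; have hC : <<Pt u>>%MS \in Cpts F by exact: imset_f.
  by move: (lC0 <<Pt u>>%MS); rewrite hC /= genmxE.
have lG : forall u, ~~ (l <= osc u)%MS.
  move=> u; have hP : <<osc u>>%MS \in planes F.
    by apply: gen_planes; rewrite rank_ker ?oscvT_neq0.
  have hG : Gplane <<osc u>>%MS.
    by apply/existsP; exists u; apply/eqmxP; exact: genmxE.
  by move: (lG0 <<osc u>>%MS); rewrite hP hG /= genmxE.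
have OP := orbit_props hq lL lC lG.
split.
- move=> m /OP [_ _ mG]; apply/eqP; rewrite cards_eq0; apply/eqP/setP => pi.
  rewrite !inE; apply/negbTE/negP => /and3P[_ /existsP [u /eqmxP E] mpi].
  by move: (mG u); rewrite -E mpi.
- move=> pi _ /existsP [u /eqmxP E]; apply/eqP; rewrite cards_eq0; apply/eqP/setP => m.
  rewrite !inE; apply/negbTE/negP => /andP[/OP [_ _ mG] mpi].
  by move: (mG u); rewrite -E mpi.
- split.
  + move=> m /OP [_ mC _]; apply/eqP; rewrite cards_eq0; apply/eqP/setP => P.
    rewrite !inE; apply/negbTE/negP => /andP[/imsetP [u _ ->]].
    by rewrite genmxE (negPf (mC u)).
  + move=> P /imsetP [u _ ->]; apply/eqP; rewrite cards_eq0; apply/eqP/setP => m.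
    rewrite !inE; apply/negbTE/negP => /andP[/OP [_ mC _]].
    by rewrite genmxE (negPf (mC u)).
- by move=> _ m /OP [mL mC mG]; exact: count_T.
- move=> h3 m /OP [mL mC mG].
  by rewrite (TO_eq_T (char3 h3) mL mG); exact: count_T.
Qed.
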